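(* Let $\Phi_p\in\mathbb{R}^{n\times d}$ be fixed with $\hat\Sigma:=\tfrac1n\Phi_p^\top\Phi_p=\mathrm{diag}(\sigma_1^2,\dots,\sigma_d^2)$, all $\sigma_j^2>0$. Suppose $Y_p=\Phi_p\beta_0+\epsilon$ with $\beta_0\in\mathbb{R}^d$ and $\epsilon\in\mathbb{R}^n$ having i.i.d. entries of mean $0$ and variance $\sigma^2$. Let $\mu\in\mathbb{R}^{1\times d}$ be a fixed target mean vector (the population target feature mean $\mathbb{E}[\Phi_q]$), let $\lambda,\delta\ge0$, let $\hat\beta^\lambda:=(\hat\Sigma+\lambda I)^{-1}\Phi_p^\top Y_p/n$, let $\hat v:=\mu(\hat\Sigma+\delta I)^{-1}\Phi_p^\top/n$, and consider the augmented estimator $\hat\psi:=\mu\hat\beta^\lambda+\hat v(Y_p-\Phi_p\hat\beta^\lambda)$ of $\mu\beta_0$. Let $\Gamma_{\lambda,\delta}:=\mathrm{diag}(\gamma_1,\dots,\gamma_d)$ with $\gamma_j:=\frac{\delta\lambda}{\sigma_j^2+\delta+\lambda}$ (and $\gamma_j:=0$ if $\delta=\lambda=0$). Then, with expectation and variance taken over $\epsilon$, $$\big(\mathbb{E}[\hat\psi]-\mu\beta_0\big)^2=\beta_0^\top(\hat\Sigma+\Gamma_{\lambda,\delta})^{-1}\Gamma_{\lambda,\delta}\,\mu^\top\mu\,\Gamma_{\lambda,\delta}(\hat\Sigma+\Gamma_{\lambda,\delta})^{-1}\beta_0,$$ $$\mathrm{Var}(\hat\psi)=\frac{\sigma^2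}{n}\,\mathrm{tr}\!\left[\hat\Sigma(\hat\Sigma+\Gamma_{\lambda,\delta})^{-1}\mu^\top\mu(\hat\Sigma+\Gamma_{\lambda,\delta})^{-1}\right].$$
   Context: This is a design-conditional analysis: $\Phi_p$ and the target mean $\mu$ are treated as fixed; only the noise $\epsilon$ is random. The hyperparameters are on the rescaled scale where ridge regression is $(\hat\Sigma+\lambda I)^{-1}\Phi_p^\top Y_p/n$. *)

(* Defs.v *)
From HB Require Import structures.
From mathcomp Require Import all_boot all_order all_algebra.
From mathcomp Require Import all_classical all_reals all_analysis.
Set Implicit Arguments. Unset Strict Implicit. Unset Printing Implicit Defensive.
Import Order.TTheory GRing.Theory Num.Theory.
Import numFieldNormedType.Exports.
Local Open Scope classical_set_scope.
Local Open Scope ring_scope.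

Definition mutually_independent d (T : measurableType d) (R : realType)
  (P : probability T R) (n : nat) (X : 'I_n -> {RV P >-> R}) : Prop :=
  forall (J : {set 'I_n}) (B : 'I_n -> set R),
    (forall i, measurable (B i)) ->
    P [set w | forall i, i \in J -> B i (X i w)] =
    (\prod_(i in J) P (X i @^-1` B i))%E.

Definition identically_distributed d (T : measurableType d) (R : realType)
  (P : probability T R) (n : nat) (X : 'I_n -> {RV P >-> R}) : Prop :=
  forall i j, distribution P (X i) = distribution P (X j).

Definition Sigma_hat (R : realType) (n d : nat) (Phi : 'M[R]_(n, d)) : 'M[R]_d :=
  n%:R^-1 *: (Phi^T *m Phi).

Definition eps_vec d0 (T : measurableType d0) (R : realType) (P : probability T R)
  (n : nat) (eps : 'I_n -> {RV P >-> R}) (w : T) : 'cV[R]_n :=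
  \col_i eps i w.

Definition Y_p d0 (T : measurableType d0) (R : realType) (P : probability T R)
  (n d : nat) (Phi : 'M[R]_(n, d)) (beta0 : 'cV[R]_d)
  (eps : 'I_n -> {RV P >-> R}) (w : T) : 'cV[R]_n :=
  Phi *m beta0 + eps_vec eps w.

Definition beta_ridge (R : realType) (n d : nat) (Phi : 'M[R]_(n, d))
  (lambda : R) (Y : 'cV[R]_n) : 'cV[R]_d :=
  n%:R^-1 *: (invmx (Sigma_hat Phi + lambda%:M) *m Phi^T *m Y).

Definition v_hat (R : realType) (n d : nat) (Phi : 'M[R]_(n, d))
  (mu : 'rV[R]_d) (delta : R) : 'rV[R]_n :=
  n%:R^-1 *: (mu *m invmx (Sigma_hat Phi + delta%:M) *m Phi^T).

Definition psi_hat d0 (T : measurableType d0) (R : realType) (P : probability T R)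
  (n d : nat) (Phi : 'M[R]_(n, d)) (beta0 : 'cV[R]_d) (mu : 'rV[R]_d)
  (lambda delta : R) (eps : 'I_n -> {RV P >-> R}) (w : T) : R :=
  let Y := Y_p Phi beta0 eps w in
  let b := beta_ridge Phi lambda Y in
  (mu *m b + v_hat Phi mu delta *m (Y - Phi *m b)) 0 0.

Definition Gamma_ld (R : realType) (d : nat) (s : 'rV[R]_d) (lambda delta : R)
  : 'M[R]_d :=
  diag_mx (\row_j (if (delta == 0) && (lambda == 0) then 0
                   else delta * lambda / (s 0 j + delta + lambda))).

(* Main.v *)
Require Import Defs.
From HB Require Import structures.
From mathcomp Require Import all_boot all_order all_algebra.
From mathcomp Require Import all_classical all_reals all_analysis.
From mathcomp Require Import measurable_realfun.
Import Order.TTheory GRing.Theory Num.Theory.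
Import numFieldNormedType.Exports.

Local Open Scope ring_scope.
From mathcomp Require Import ring lra.
Local Open Scope classical_set_scope.
Section indep.
Context dT (T : measurableType dT) (R : realType) (P : probability T R).
Local Open Scope ereal_scope.

Lemma indep_expectationM (X Y : {RV P >-> R}) :
  (X : T -> R) \in Lfun P 2%:E -> (Y : T -> R) \in Lfun P 2%:E ->
  (forall A B, measurable A -> measurable B ->
     P (X @^-1` A `&` Y @^-1` B) = P (X @^-1` A) * P (Y @^-1` B)) ->
  'E_P[(X : T -> R) \* Y] = 'E_P[X] * 'E_P[Y].
Proof.
move=> X2 Y2 XY.
have X1 : (X : T -> R) \in Lfun P 1 by rewrite Lfun_subset12 ?fin_num_measure.
have Y1 : (Y : T -> R) \in Lfun P 1 by rewrite Lfun_subset12 ?fin_num_measure.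
have XY1 := Lfun2_mul_Lfun1 X2 Y2.
pose Z := fun w => (X w, Y w).
have mZ : measurable_fun setT Z by exact: measurable_fun_pair.
pose Q := pushforward P Z.
pose mX := distribution P X.
pose mY := distribution P Y.
have QE : forall S, measurable S -> (mX \x mY) S = Q S.
  apply: product_measure_unique => A B mA mB.
  by rewrite /pushforward /distribution /pushforward -XY.
pose f := fun z : R * R => ((z.1 * z.2)%R)%:E.
have mf : measurable_fun [set: (R * R)%type] f.
  apply/measurable_EFinP; apply: measurable_funM => //.
have iPZ : P.-integrable (Z @^-1` setT) (f \o Z).
  by rewrite preimage_setT; exact/Lfun1_integrable.
have iQ : Q.-integrable setT f by exact: integrable_pushforward.
have iXY : (mX \x mY).-integrable setT f.
  apply/integrableP; split => //.
  move/integrableP : iQ => [_]; apply: le_lt_trans.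
  by rewrite (eq_measure_integral Q) // => A mA _; exact: QE.
have intgen : forall (V : {RV P >-> R}), (V : T -> R) \in Lfun P 1 ->
    (distribution P V).-integrable setT EFin /\
    \int[distribution P V]_y (y%:E) = 'E_P[V].
  move=> V V1.
  have iV : P.-integrable (V @^-1` setT) (EFin \o V).
    by rewrite preimage_setT; exact/Lfun1_integrable.
  split; first exact: integrable_pushforward.
  rewrite integral_pushforward// preimage_setT unlock//.
have [iY EYE] := intgen Y Y1.
have [iX EXE] := intgen X X1.
have EYf : 'E_P[Y] = (fine 'E_P[Y])%:E by rewrite fineK// expectation_fin_num.
transitivity (\int[P]_(w in Z @^-1` setT) (f \o Z) w).
  by rewrite preimage_setT unlock.
rewrite -integral_pushforward//.
rewrite -(eq_measure_integral _ (fun A mA _ => QE A mA)).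
rewrite -integral12_prod_meas1//.
transitivity (\int[mX]_x (x%:E * 'E_P[Y])).
  apply: eq_integral => x _.
  rewrite /fubini_F -EYE -integralZl//.
by rewrite EYf integralZr// EXE.
exact: mZ.
Qed.
End indep.
Lemma mi_pair dT (T : measurableType dT) (R : realType) (P : probability T R)
  (n : nat) (X : 'I_n -> {RV P >-> R}) : mutually_independent X ->
  forall i j : 'I_n, i != j -> forall A B, measurable A -> measurable B ->
  P (X i @^-1` A `&` X j @^-1` B) = (P (X i @^-1` A) * P (X j @^-1` B))%E.
Proof.
move=> mi i j ij A B mA mB.
pose Bf k := if k == i then A else if k == j then B else setT.
have mBf : forall k, measurable (Bf k).
  by move=> k; rewrite /Bf; case: ifP => _ //; case: ifP.
have := mi [set i; j]%SET Bf mBf.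
rewrite big_setU1/=; last first.
  by rewrite !inE.
rewrite big_set1 /Bf eqxx eq_sym (negbTE ij) eqxx => <-.
congr (P _); apply/seteqP; split => w /=.
- move=> [Ai Bj] k; rewrite !inE => /orP[]/eqP->; first by rewrite eqxx.
  by rewrite eq_sym (negbTE ij) eqxx.
- move=> H; split.
    by have := H i; rewrite !inE eqxx /=; apply.
  by have := H j; rewrite !inE eqxx orbT eq_sym (negbTE ij); apply.
Qed.
Lemma psi_mx (R : realType) (n d : nat) (Phi : 'M[R]_(n, d)) (mu : 'rV[R]_d)
  (lambda delta : R) (Y : 'cV[R]_n) :
  let Ai := invmx (Sigma_hat Phi + lambda%:M) in
  let Bi := invmx (Sigma_hat Phi + delta%:M) in
  mu *m beta_ridge Phi lambda Y + v_hat Phi mu delta *m (Y - Phi *m beta_ridge Phi lambda Y)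
  = mu *m (Ai + Bi - Bi *m Sigma_hat Phi *m Ai) *m (n%:R^-1 *: (Phi^T *m Y)).
Proof.
move=> Ai Bi.
rewrite /beta_ridge /v_hat -/Ai -/Bi.
set k := n%:R^-1.
have -> : k *: (Ai *m Phi^T *m Y) = Ai *m (k *: (Phi^T *m Y)) by rewrite -mulmxA scalemxAr.
set z := k *: (Phi^T *m Y).
rewrite mulmxBr [X in _ - X]mulmxA.
have -> : k *: (mu *m Bi *m Phi^T) *m Phi = mu *m Bi *m Sigma_hat Phi.
  by rewrite /Sigma_hat -scalemxAl -!mulmxA !scalemxAr.
have -> : k *: (mu *m Bi *m Phi^T) *m Y = mu *m Bi *m z.
  by rewrite /z -scalemxAl -!mulmxA !scalemxAr.
rewrite !(mulmxDr, mulmxDl, mulmxN, mulNmx, mulmxA).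
by rewrite addrA.
Qed.
Lemma entry_id (R : realFieldType) (s l e : R) : 0 < s -> 0 <= l -> 0 <= e ->
  let g := if (e == 0) && (l == 0) then 0 else e * l / (s + e + l) in
  (s + l)^-1 + (s + e)^-1 - (s + e)^-1 * s * (s + l)^-1 = (s + g)^-1.
Proof.
move=> s0 l0 e0 g; rewrite /g.
have sl : s + l != 0 by rewrite gt_eqF // ltr_wpDr.
have se : s + e != 0 by rewrite gt_eqF // ltr_wpDr.
case: ifP => [/andP[/eqP -> /eqP ->]|_].
  rewrite !addr0; field; by rewrite gt_eqF.
have sel : s + e + l != 0 by rewrite gt_eqF // -addrA ltr_wpDr // addr_ge0.
have : s + e * l / (s + e + l) = (s + e) * (s + l) / (s + e + l) by field.
move=> ->; field; rewrite sl se sel //.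
Qed.

Lemma invmx_diag (R : fieldType) d (r : 'rV[R]_d) : (forall j, r 0 j != 0) ->
  invmx (diag_mx r) = diag_mx (\row_j (r 0 j)^-1).
Proof.
move=> r0.
have H : diag_mx r *m diag_mx (\row_j (r 0 j)^-1) = 1%:M.
  rewrite mulmx_diag -diag_const_mx; congr diag_mx; apply/rowP => j.
  by rewrite !mxE mulfV.
have [Ru _] := mulmx1_unit H.
by rewrite -[RHS]mul1mx -(mulVmx Ru) -mulmxA H mulmx1.
Qed.

Lemma M_facts (R : realType) d (s : 'rV[R]_d) (l e : R) :
  (forall j, 0 < s 0 j) -> 0 <= l -> 0 <= e ->
  let G := Gamma_ld s l e in
  let mrow := \row_j (s 0 j + G j j)^-1 in
  invmx (diag_mx s + G) = diag_mx mrow /\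
  invmx (diag_mx s + l%:M) + invmx (diag_mx s + e%:M)
    - invmx (diag_mx s + e%:M) *m diag_mx s *m invmx (diag_mx s + l%:M)
  = invmx (diag_mx s + G).
Proof.
move=> s0 l0 e0 G mrow.
have DC : forall x : R, (x%:M : 'M[R]_d) = diag_mx (const_mx x) by move=> x; rewrite diag_const_mx.
have addD : forall x : R, diag_mx s + x%:M = diag_mx (\row_j (s 0 j + x)).
  move=> x; rewrite DC -raddfD; congr diag_mx; apply/rowP => j; by rewrite !mxE.
have Ginv : invmx (diag_mx s + G) = diag_mx mrow.
  rewrite /G /Gamma_ld -raddfD invmx_diag; last first.
    move=> j; rewrite !mxE; case: ifP => _; first by rewrite addr0 gt_eqF.
    rewrite gt_eqF // ltr_wpDr // divr_ge0 ?mulr_ge0 // addr_ge0 // addr_ge0 //.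
    exact: ltW.
  congr diag_mx; apply/rowP => j; rewrite /mrow !mxE.
  by rewrite eqxx mulr1n.
split => //.
have nz : forall x, 0 <= x -> forall j, (\row_j (s 0 j + x)) 0 j != 0.
  by move=> x x0 j; rewrite mxE gt_eqF // ltr_wpDr.
rewrite Ginv !addD !invmx_diag; try by apply: nz.
rewrite !mulmx_diag -raddfD -raddfB; congr diag_mx; apply/rowP => j.
rewrite /mrow /G /Gamma_ld !mxE eqxx mulr1n.
by have := @entry_id _ _ _ _ (s0 j) l0 e0 => /= <-.
Qed.

Section Esum.
Context dT (T : measurableType dT) (R : realType) (P : probability T R).
Local Open Scope ereal_scope.

Lemma Lsum_ord n (F : 'I_n -> T -> R) : (forall i, F i \in Lfun P 1) ->
  (fun w => (\sum_(i < n) F i w)%R) \in Lfun P 1.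
Proof.
move=> HF; rewrite -fct_sumE; exact: rpred_sum.
Qed.

Lemma Esum_ord n (F : 'I_n -> T -> R) : (forall i, F i \in Lfun P 1) ->
  'E_P[fun w => (\sum_(i < n) F i w)%R] = \sum_(i < n) 'E_P[F i].
Proof.
move=> HF.
have -> : (fun w => (\sum_(i < n) F i w)%R) = (\sum_(Xi <- map F (index_enum 'I_n)) Xi)%R.
  by rewrite big_map fct_sumE.
rewrite expectation_sum ?big_map // => Xi /mapP [i _ ->]; exact: HF.
Qed.
End Esum.

Theorem mainTheorem9 (dT : measure_display) (T : measurableType dT)
  (R : realType) (P : probability T R) (n d : nat)
  (Phi : 'M[R]_(n, d)) (s : 'rV[R]_d) (beta0 : 'cV[R]_d) (mu : 'rV[R]_d)
  (sigma lambda delta : R) (eps : 'I_n -> {RV P >-> R}) :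
  Sigma_hat Phi = diag_mx s ->
  (forall j, 0 < s 0 j) ->
  mutually_independent eps ->
  identically_distributed eps ->
  (forall i, (eps i : T -> R) \in Lfun P 2%:E) ->
  (forall i, ('E_P[eps i] = 0)%E) ->
  (forall i, ('V_P[eps i] = (sigma ^+ 2)%:E)%E) ->
  0 <= lambda -> 0 <= delta ->
  let psi := psi_hat Phi beta0 mu lambda delta eps in
  let G := Gamma_ld s lambda delta in
  let Sig := Sigma_hat Phi in
  (('E_P[psi] - ((mu *m beta0) 0 0)%:E) * ('E_P[psi] - ((mu *m beta0) 0 0)%:E)
     = ((beta0^T *m invmx (Sig + G) *m G *m mu^T *m mu *m G
          *m invmx (Sig + G) *m beta0) 0 0)%:E)%E /\
  ('V_P[psi] = (sigma ^+ 2 / n%:R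
                 * \tr (Sig *m invmx (Sig + G) *m mu^T *m mu *m invmx (Sig + G)))%:E)%E.
Proof.
move=> HS s0 mi _ L2 E0 V0 l0 d0 psi G Sig.
have [Mdiag HM] := @M_facts R d s lambda delta s0 l0 d0.
rewrite -/G in Mdiag HM.
set M := invmx (Sig + G).
have SigE : Sig = diag_mx s by [].
rewrite -SigE -/M in Mdiag HM.
set mrow := \row_j (s 0 j + G j j)^-1 in Mdiag.
have Gdiag : G = diag_mx (\row_j G j j).
  apply/matrixP => i j; rewrite /G /Gamma_ld !mxE; case: eqP => [->|]; by rewrite ?eqxx ?mulr0n ?mulr1n.
have MT : M^T = M by rewrite Mdiag tr_diag_mx.
have GT : G^T = G by rewrite Gdiag tr_diag_mx.
have MG : M *m G = G *m M by rewrite Mdiag Gdiag diag_mx_comm.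
have Gpos : forall j, 0 <= G j j.
  move=> j; rewrite /G /Gamma_ld !mxE eqxx mulr1n; case: ifP => // _.
  by rewrite divr_ge0 ?mulr_ge0 // !addr_ge0 // ltW.
have Mu : M *m (Sig + G) = 1%:M.
  rewrite Mdiag SigE [in X in _ *m X]Gdiag -raddfD mulmx_diag -diag_const_mx.
  congr diag_mx; apply/rowP => j; rewrite !mxE mulVf // gt_eqF // ltr_wpDr //.
  by have := Gpos j; rewrite /G /Gamma_ld !mxE.
pose a : 'rV[R]_n := n%:R^-1 *: (mu *m M *m Phi^T).
pose c := (mu *m M *m Sig *m beta0) 0 0.
pose e := fun i => (eps i : T -> R).
have psiE : psi = fun w => c + \sum_(i < n) a 0 i * e i w.
  apply/funext => w.
  rewrite /psi /psi_hat psi_mx HM /Y_p.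
  rewrite mulmxDr scalerDr mulmxDr mxE.
  have -> : n%:R^-1 *: (Phi^T *m (Phi *m beta0)) = Sig *m beta0.
    by rewrite mulmxA scalemxAl.
  rewrite mulmxA; congr (_ + _).
  have -> : mu *m M *m (n%:R^-1 *: (Phi^T *m eps_vec eps w)) = a *m eps_vec eps w.
    by rewrite /a -scalemxAl -scalemxAr !mulmxA.
  by rewrite mxE; apply: eq_bigr => i _; rewrite /eps_vec !mxE.
have L1 : forall i, e i \in Lfun P 1.
  by move=> i; rewrite Lfun_subset12 ?fin_num_measure //; exact: L2.
have Lt : forall i, (fun w => a 0 i * e i w) \in Lfun P 1.
  move=> i; have := Lfun_scale (a 0 i) (lexx 1) (L1 i).
  suff -> : (fun w => a 0 i * e i w) = a 0 i \o* e i by []. 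
  by apply/funext => w; rewrite /= mulrC.
have EPsi : ('E_P[psi] = c%:E)%E.
  rewrite psiE.
  have -> : (fun w => c + \sum_(i < n) a 0 i * e i w) =
     (cst c \+ (fun w => \sum_(i < n) a 0 i * e i w))%R by [].
  rewrite expectationD ?Lfun_cst ?Lsum_ord // (expectation_cst P c) Esum_ord //.
  rewrite big1 ?adde0 // => i _.
  have := expectationZl (a 0 i) (L1 i); rewrite E0 mule0 => <-.
  by congr expectation; apply/funext => w; rewrite /= mulrC.
split.
  rewrite EPsi -EFinB -EFinM; congr EFin.
  have MS : M *m Sig = 1%:M - M *m G by rewrite -Mu mulmxDr addrK.
  have Heq : mu *m M *m Sig *m beta0 = mu *m beta0 - mu *m G *m M *m beta0.
    by rewrite -(mulmxA mu M Sig) MS mulmxBr mulmx1 MG mulmxA mulmxBl.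
  have cE : c - (mu *m beta0) 0 0 = - (mu *m G *m M *m beta0) 0 0.
    by rewrite /c Heq [X in X - _]mxE [X in _ + X - _]mxE addrAC subrr add0r.
  have AT : beta0^T *m M *m G *m mu^T = (mu *m G *m M *m beta0)^T.
    by rewrite !trmx_mul MT GT !mulmxA.
  rewrite cE mulrNN.
  have -> : beta0^T *m M *m G *m mu^T *m mu *m G *m M *m beta0 =
    (beta0^T *m M *m G *m mu^T) *m (mu *m G *m M *m beta0) by rewrite !mulmxA.
  rewrite AT [RHS]mxE big_ord1; congr (_ * _); by rewrite [RHS]mxE.
have Eee : forall i j, ('E_P[e i \* e j] = (if i == j then sigma ^+ 2 else 0)%:E)%E.
  move=> i j; case: eqVneq => [<-|ij].
    have := V0 i; rewrite /variance unlock E0 /= => <-.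
    congr expectation; apply/funext => w.
    by change (e i w * e i w = (e i w - 0) * (e i w - 0)); rewrite subr0.
  rewrite (@indep_expectationM _ _ _ P (eps i) (eps j) (L2 i) (L2 j) (@mi_pair _ _ _ _ _ _ mi i j ij)).
  by rewrite /e !E0 mule0.
rewrite /variance unlock EPsi /=.
have -> : ((psi \- cst c) * (psi \- cst c))%R =
    (fun w => \sum_(i < n) \sum_(j < n) (a 0 i * a 0 j) * (e i w * e j w))%R.
  apply/funext => w; rewrite mulrfctE psiE /= addrC addKr mulr_suml.
  apply: eq_bigr => i _; rewrite mulr_sumr; apply: eq_bigr => j _.
  by rewrite mulrACA.
have Lij : forall i j, (fun w => (a 0 i * a 0 j) * (e i w * e j w))%R \in Lfun P 1.
  move=> i j; have := Lfun_scale (a 0 i * a 0 j) (lexx 1) (Lfun2_mul_Lfun1 (L2 i) (L2 j)).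
  suff -> : (fun w => (a 0 i * a 0 j) * (e i w * e j w))%R =
    (a 0 i * a 0 j) \o* (e i \* e j) by [].
  by apply/funext => w; rewrite /= mulrC.
rewrite Esum_ord; last by move=> i; apply: Lsum_ord => j; exact: Lij.
under eq_bigr => i _ do rewrite Esum_ord //.
have Ek : forall i j, ('E_P[fun w => ((a 0 i * a 0 j) * (e i w * e j w))%R] =
    (((a 0 i * a 0 j) * (if i == j then sigma ^+ 2 else 0))%R)%:E)%E.
  move=> i j; rewrite EFinM -Eee.
  have := expectationZl (a 0 i * a 0 j) (Lfun2_mul_Lfun1 (L2 i) (L2 j)) => <-.
  by congr expectation; apply/funext => w; rewrite /= mulrC.
under eq_bigr => i _ do under eq_bigr => j _ do rewrite Ek.
under eq_bigr => i _ do rewrite sumEFin.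
rewrite sumEFin; congr EFin.
have inner : forall i, \sum_(j < n) a 0 i * a 0 j * (if i == j then sigma ^+ 2 else 0)
    = a 0 i * a 0 i * sigma ^+ 2.
  move=> i; rewrite (bigD1 i) //= eqxx big1 ?addr0 // => j /negbTE.
  by rewrite eq_sym => ->; rewrite mulr0.
under eq_bigr => i _ do rewrite inner.
rewrite -mulr_suml.
pose v := mu *m M *m Phi^T.
have asum : \sum_i a 0 i * a 0 i = n%:R^-1 * n%:R^-1 * (v *m v^T) 0 0.
  rewrite [in RHS]mxE mulr_sumr; apply: eq_bigr => i _.
  have sE : forall (A : 'rV[R]_n) k, (k *: A) 0 i = k * A 0 i by move=> *; rewrite mxE.
  have tE : forall (A : 'rV[R]_n), A^T i 0 = A 0 i by move=> *; rewrite mxE.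
  by rewrite /a !sE tE -/v mulrACA.
have vv : v *m v^T = mu *m M *m (Phi^T *m Phi) *m M *m mu^T.
  by rewrite /v !trmx_mul MT trmxK !mulmxA.
have trE : \tr (Sig *m M *m mu^T *m mu *m M) = (mu *m M *m Sig *m M *m mu^T) 0 0.
  by rewrite -(mulmxA (Sig *m M *m mu^T)) mxtrace_mulC trace_mx11 !mulmxA.
have SigZ : mu *m M *m Sig *m M *m mu^T = n%:R^-1 *: (mu *m M *m (Phi^T *m Phi) *m M *m mu^T).
  by rewrite /Sig /Sigma_hat -scalemxAr -!scalemxAl.
apply: (@eq_trans _ _ ((n%:R^-1 * n%:R^-1 * (v *m v^T) 0 0) * sigma ^+ 2)).
  by congr (_ * _); exact: asum.
rewrite vv trE SigZ [X in _ = _ * X]mxE.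
by ring.
Qed.
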